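(* Let $\Phi:\{0,1\}^n\to\{0,1\}^n$, $\mu\in\{0,1\}^n$ and $\rho\in P_n$. Then: a) $\overline{W}[\Phi^\rho(\mu,\cdot)]=\overline{W}(Or_\rho(\mu))$; b) $\underline{W}[\Phi^\rho(\mu,\cdot)]\subset\underline{W}(Or_\rho(\mu))$; c) $\overline{W}[\omega_\rho(\mu)]=\overline{W}(\omega_\rho(\mu))$; d) $\underline{W}[\omega_\rho(\mu)]\subset\underline{W}(\omega_\rho(\mu))$.
   Context: Let $\mathbf{B}=\{0,1\}$ (discrete topology), $n\ge1$, $\Phi:\mathbf{B}^n\to\mathbf{B}^n$. For $\nu\in\mathbf{B}^n$: $\Phi^\nu_i(\mu)=\mu_i$ if $\nu_i=0$, $=\Phi_i(\mu)$ if $\nu_i=1$; $\Phi^{\alpha^0\dots\alpha^k}=\Phi^{\alpha^k}\circ\cdots\circ\Phi^{\alpha^0}$. A sequence $(\alpha^k)_{k\in\mathbf{N}}$ in $\mathbf{B}^n$ is progressive if each $\{k:\alpha^k_i=1\}$ is infinite. $Seq$ = strictly increasing real sequences unbounded above. $P_n$ = functions $\rho:\mathbf{R}\to\mathbf{B}^n$ with $\rho(t_k)=\alpha^k$, $\rho(t)=0$ for $t\notin\{t_k\}$, $\alpha$ progressive, $(t_k)\in Seq$. Orbit: $\Phi^\rho(\mu,t)=\mu$ for $t<t_0$, $=\Phi^{\alpha^0\dots\alpha^k}(\mu)$ for $t\in[t_k,t_{k+1})$; $Or_\rho(\mu)=\{\Phi^\rho(\mu,t):t\in\mathbf{R}\}$.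 $\omega_\rho(\mu)=\{\mu':\exists(s_k)\in Seq,\ \Phi^\rho(\mu,s_k)=\mu'$ for all large $k\}$. For a nonempty set $A\subset\mathbf{B}^n$: $\overline{W}(A)=\{\mu':\exists\rho'\in P_n,\ \omega_{\rho'}(\mu')\subset A\}$ and $\underline{W}(A)=\{\mu':\forall\rho'\in P_n,\ \omega_{\rho'}(\mu')\subset A\}$. Basins of the orbit and $\omega$-limit set: $\overline{W}[\Phi^\rho(\mu,\cdot)]=\{\mu':\exists\rho'\in P_n,\exists t',\forall t\ge t',\ \Phi^{\rho'}(\mu',t)=\Phi^\rho(\mu,t)\}$, $\underline{W}[\Phi^\rho(\mu,\cdot)]=\{\mu':\forall\rho'\in P_n,\exists t',\forall t\ge t',\ \Phi^{\rho'}(\mu',t)=\Phi^\rho(\mu,t)\}$, $\overline{W}[\omega_\rho(\mu)]=\{\mu':\exists\rho'\in P_n,\ \omega_{\rho'}(\mu')=\omega_\rho(\mu)\}$, $\underline{W}[\omega_\rho(\mu)]=\{\mu':\forall\rho'\in P_n,\ \omega_{\rho'}(\mu')=\omega_\rho(\mu)\}$. *)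

(* Defs.v *)
From mathcomp Require Import all_boot.
From Stdlib Require Import Reals ClassicalEpsilon.

Set Implicit Arguments.
Unset Strict Implicit.
Unset Printing Implicit Defensive.

Definition state (n : nat) := {ffun 'I_n -> bool}.

Definition sset (n : nat) := state n -> Prop.
Definition ssub n (A B : sset n) : Prop := forall x, A x -> B x.
Definition seqv n (A B : sset n) : Prop := forall x, A x <-> B x.

Section Dyn.
Variable n : nat.
Variable Phi : state n -> state n.

Definition phi_nu (nu : state n) (mu : state n) : state n :=
  [ffun i => if nu i then Phi mu i else mu i].

(* iter_app alpha k mu = Phi^{alpha^0 ... alpha^(k-1)} (mu); iter_app alpha 0 mu = mu *)
Fixpoint iter_app (alpha : nat -> state n) (k : nat) (mu : state n) : state n :=
  match k with
  | O => mu
  | S k' => phi_nu (alpha k') (iter_app alpha k' mu)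
  end.
End Dyn.

Definition progressive n (alpha : nat -> state n) : Prop :=
  forall (i : 'I_n) (k : nat), exists k', (k <= k')%N /\ alpha k' i = true.

Definition Seq (t : nat -> R) : Prop :=
  (forall k, (t k < t (S k))%R) /\ (forall M : R, exists k, (M < t k)%R).

(* An element of P_n, given by its data (alpha^k), (t_k):
   rho(t_k) = alpha^k and rho(t) = 0 elsewhere. *)
Record Pn (n : nat) := mkPn {
  p_alpha : nat -> state n;
  p_t : nat -> R;
  p_prog : progressive p_alpha;
  p_seq : Seq p_t }.

Definition rho_fun n (rho : Pn n) (s : R) : state n :=
  match excluded_middle_informative (exists k, p_t rho k = s) with
  | left _ => p_alpha rho (epsilon (inhabits 0%nat) (fun k => p_t rho k = s))
  | right _ => [ffun=> false]
  end.

Definition time_idx n (rho : Pn n) (s : R) : nat :=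
  epsilon (inhabits 0%nat) (fun k => (p_t rho k <= s < p_t rho (S k))%R).

Definition orbit n (Phi : state n -> state n) (rho : Pn n) (mu : state n) (s : R)
  : state n :=
  if Rlt_dec s (p_t rho 0) then mu
  else iter_app Phi (p_alpha rho) (S (time_idx rho s)) mu.

Definition Or n (Phi : state n -> state n) (rho : Pn n) (mu : state n) : sset n :=
  fun nu => exists s : R, orbit Phi rho mu s = nu.

Definition omega n (Phi : state n -> state n) (rho : Pn n) (mu : state n) : sset n :=
  fun nu => exists sk : nat -> R, Seq sk /\
    exists K, forall k, (K <= k)%N -> orbit Phi rho mu (sk k) = nu.

Definition Wbar n (Phi : state n -> state n) (A : sset n) : sset n :=
  fun mu' => exists rho' : Pn n, ssub (omega Phi rho' mu') A.
Definition Wund n (Phi : state n -> state n) (A : sset n) : sset n :=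
  fun mu' => forall rho' : Pn n, ssub (omega Phi rho' mu') A.

Definition Wbar_orb n (Phi : state n -> state n) (rho : Pn n) (mu : state n) : sset n :=
  fun mu' => exists rho' : Pn n, exists t' : R, forall t : R, (t' <= t)%R ->
    orbit Phi rho' mu' t = orbit Phi rho mu t.
Definition Wund_orb n (Phi : state n -> state n) (rho : Pn n) (mu : state n) : sset n :=
  fun mu' => forall rho' : Pn n, exists t' : R, forall t : R, (t' <= t)%R ->
    orbit Phi rho' mu' t = orbit Phi rho mu t.

Definition Wbar_om n (Phi : state n -> state n) (rho : Pn n) (mu : state n) : sset n :=
  fun mu' => exists rho' : Pn n, seqv (omega Phi rho' mu') (omega Phi rho mu).
Definition Wund_om n (Phi : state n -> state n) (rho : Pn n) (mu : state n) : sset n :=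
  fun mu' => forall rho' : Pn n, seqv (omega Phi rho' mu') (omega Phi rho mu).

(* Main.v *)
Require Import Defs.
From mathcomp Require Import all_boot.
From Stdlib Require Import Reals.
From mathcomp Require Import zify.
From Stdlib Require Import Lra Lia Classical ClassicalEpsilon.

Section Aux.

Lemma seq_lt (t : nat -> R) : Seq t -> forall i j, (i < j)%coq_nat -> (t i < t j)%R.
Proof.
  move=> [Hs _] i j Hij. induction Hij as [|j Hij IH].
  - apply Hs.
  - apply Rlt_trans with (t j); [exact IH| apply Hs].
Qed.

Lemma seq_le (t : nat -> R) : Seq t -> forall i j, (i <= j)%coq_nat -> (t i <= t j)%R.
Proof.
  move=> Ht i j Hij. destruct (Nat.eq_dec i j) as [->|Hne]; [lra|].
  left; apply (seq_lt _ Ht); lia.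
Qed.

Lemma seq_ev (t : nat -> R) : Seq t -> forall T, exists K, forall k, (K <= k)%coq_nat -> (T <= t k)%R.
Proof.
  move=> Ht T. destruct (proj2 Ht T) as [K HK]. exists K => k Hk.
  have := seq_le _ Ht _ _ Hk. lra.
Qed.

Lemma locate (t : nat -> R) : Seq t -> forall s, (t O <= s)%R ->
  exists k, (t k <= s < t (S k))%R.
Proof.
  move=> Ht s Hs. destruct (proj2 Ht s) as [N HN].
  revert HN. induction N as [|N IH] => HN. lra.
  destruct (Rlt_dec s (t N)) as [H|H]. auto. exists N. lra.
Qed.

Lemma orbit_at n (Phi : state n -> state n) (rho : Pn n) (mu : state n) s k :
  (p_t rho k <= s < p_t rho (S k))%R ->
  Defs.orbit Phi rho mu s = iter_app Phi (p_alpha rho) (S k) mu.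
Proof.
  move=> Hk. have Ht := p_seq rho.
  unfold Defs.orbit. destruct (Rlt_dec s (p_t rho 0)) as [H|H].
  - have := seq_le _ Ht _ _ (Nat.le_0_l k). lra.
  - unfold time_idx.
    set P := (fun k0 : nat => (p_t rho k0 <= s < p_t rho (S k0))%R).
    have HP : P (epsilon (inhabits 0%nat) P) by apply epsilon_spec; exists k.
    suff -> : epsilon (inhabits 0%nat) P = k by [].
    set e := epsilon _ _ in HP *. unfold P in HP.
    destruct (Nat.lt_trichotomy e k) as [Hl|[Hl|Hl]]; auto.
    + have := seq_le _ Ht _ _ (Hl : (S e <= k)%coq_nat). lra.
    + have := seq_le _ Ht _ _ (Hl : (S k <= e)%coq_nat). lra.
Qed.

Lemma orbit_val n (Phi : state n -> state n) (rho : Pn n) (mu : state n) s : exists j, Defs.orbit Phi rho mu s = iter_app Phi (p_alpha rho) j mu.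
Proof.
  unfold Defs.orbit. destruct (Rlt_dec _ _). by exists 0%nat. by eexists.
Qed.

Lemma iter_ext n (Phi : state n -> state n) (f g : nat -> state n) k (mu : state n) :
  (forall i, (i < k)%coq_nat -> f i = g i) -> iter_app Phi f k mu = iter_app Phi g k mu.
Proof.
  induction k as [|k IH] => H //=. rewrite H; [|lia]. rewrite IH //. move=> i Hi; apply H; lia.
Qed.

Lemma construct n (Phi : state n -> state n) (rho : Pn n) (mu mu' : state n) (beta : nat -> state n) m j :
  iter_app Phi beta m mu' = iter_app Phi (p_alpha rho) j mu ->
  exists (rho'' : Pn n) T, forall s, (T <= s)%R -> Defs.orbit Phi rho'' mu' s = Defs.orbit Phi rho mu s.
Proof.
  move=> Heq.
  have Ht := p_seq rho. have Hp := p_prog rho.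
  set a2 := fun i => if Nat.ltb i m then beta i else p_alpha rho (i - m + j)%coq_nat.
  set t2 := fun i => if Nat.ltb i m then (p_t rho j - INR (m - i)%coq_nat)%R else p_t rho (i - m + j)%coq_nat.
  have Hp2 : progressive a2.
  { move=> i0 k. destruct (Hp i0 (k + j)%coq_nat) as [k'' [Hk1 Hk2]].
    exists (k'' - j + m)%coq_nat. split. lia.
    unfold a2. have -> : Nat.ltb (k'' - j + m)%coq_nat m = false by apply Nat.ltb_ge; lia.
    have -> : (k'' - j + m - m + j)%coq_nat = k'' by lia. exact Hk2. }
  have Hs2 : Seq t2.
  { split.
    - move=> i. unfold t2.
      destruct (Nat.ltb_spec i m); destruct (Nat.ltb_spec (S i) m).
      + have -> : (m - i)%coq_nat = S (m - S i)%coq_nat by lia. rewrite S_INR. lra.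
      + have -> : (S i - m + j)%coq_nat = j by lia.
        have -> : (m - i)%coq_nat = 1%nat by lia. simpl. lra.
      + lia.
      + have -> : (S i - m + j)%coq_nat = S (i - m + j)%coq_nat by lia. apply Ht.
    - move=> M. destruct (proj2 Ht M) as [k Hk]. exists (k + m)%coq_nat.
      unfold t2. have -> : Nat.ltb (k + m)%coq_nat m = false by apply Nat.ltb_ge; lia.
      apply Rlt_le_trans with (p_t rho k); auto; apply seq_le; [exact Ht|lia]. }
  have Hit : forall r, iter_app Phi a2 (m + r)%coq_nat mu' = iter_app Phi (p_alpha rho) (j + r)%coq_nat mu.
  { induction r as [|r IH].
    - rewrite !Nat.add_0_r -Heq. apply iter_ext => i Hi. unfold a2.
      by have -> : Nat.ltb i m = true by apply Nat.ltb_lt.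
    - rewrite !Nat.add_succ_r /= IH. unfold a2.
      have -> : Nat.ltb (m + r)%coq_nat m = false by apply Nat.ltb_ge; lia.
      by have -> : (m + r - m + j)%coq_nat = (j + r)%coq_nat by lia. }
  exists (mkPn Hp2 Hs2), (p_t rho j) => s Hs.
  have Ht0 : (p_t rho O <= s)%R by have := seq_le _ Ht _ _ (Nat.le_0_l j); lra.
  destruct (locate _ Ht _ Ht0) as [k Hk].
  have Hjk : (j <= k)%coq_nat.
  { destruct (Nat.le_gt_cases j k) as [H|H]; auto.
    have := seq_le _ Ht _ _ (H : (S k <= j)%coq_nat). lra. }
  rewrite (orbit_at _ _ _ _ _ _ Hk).
  rewrite (@orbit_at _ _ _ _ _ (m + (k - j))%coq_nat).
  - change (iter_app Phi a2 (S (m + (k - j))%coq_nat) mu' = iter_app Phi (p_alpha rho) (S k) mu). have -> : S (m + (k - j))%coq_nat = (m + S (k - j))%coq_nat by lia. rewrite Hit. f_equal. lia.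
  - simpl. unfold t2.
    have -> : Nat.ltb (m + (k - j))%coq_nat m = false by apply Nat.ltb_ge; lia.
    have -> : Nat.ltb (S (m + (k - j)))%coq_nat m = false by apply Nat.ltb_ge; lia.
    have -> : (m + (k - j) - m + j)%coq_nat = k by lia.
    have -> : (S (m + (k - j)) - m + j)%coq_nat = S k by lia. exact Hk.
Qed.

Lemma ev_omega_Or n (Phi : state n -> state n) (r1 r2 : Pn n) (m1 m2 : state n) T :
  (forall s, (T <= s)%R -> Defs.orbit Phi r1 m1 s = Defs.orbit Phi r2 m2 s) ->
  ssub (omega Phi r1 m1) (Or Phi r2 m2).
Proof.
  move=> H nu [sk [Hsk [K HK]]]. destruct (seq_ev _ Hsk T) as [K' HK'].
  exists (sk (K + K')%coq_nat). rewrite -H. apply HK. lia. apply HK'; lia.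
Qed.

Lemma ev_omega n (Phi : state n -> state n) (r1 r2 : Pn n) (m1 m2 : state n) T :
  (forall s, (T <= s)%R -> Defs.orbit Phi r1 m1 s = Defs.orbit Phi r2 m2 s) ->
  ssub (omega Phi r1 m1) (omega Phi r2 m2).
Proof.
  move=> H nu [sk [Hsk [K HK]]]. destruct (seq_ev _ Hsk T) as [K' HK'].
  exists sk; split; auto. exists (K + K')%coq_nat => k Hk. rewrite -H. apply HK. lia. apply HK'; lia.
Qed.

Lemma pigeon n (x : nat -> state n) : exists nu, forall N, exists k, (N <= k)%coq_nat /\ x k = nu.
Proof.
  apply NNPP => Hn.
  have Hb : forall nu, exists N, forall k, (N <= k)%coq_nat -> x k <> nu.
  { move=> nu. apply NNPP => H1. apply Hn. exists nu => N. apply NNPP => H2.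
    apply H1. exists N => k Hk Hx. apply H2. by exists k. }
  have Hl : forall l : seq (state n), exists N, forall k, (N <= k)%coq_nat ->
      forall nu, List.In nu l -> x k <> nu.
  { elim=> [|a l [N HN]]. by exists 0%nat.
    destruct (Hb a) as [N' HN']. exists (N + N')%coq_nat => k Hk nu [<-|Hi].
    apply HN'; lia. apply HN; auto; lia. }
  destruct (Hl (enum (state n))) as [N HN].
  apply (HN N (le_n N) (x N)); auto.
  have : x N \in enum (state n) by rewrite mem_enum.
  elim: (enum (state n)) => [|a l IH] //=. rewrite in_cons => /orP [/eqP ->|H]; auto.
Qed.

Lemma omega_ne n (Phi : state n -> state n) (rho : Pn n) (mu : state n) : exists nu, omega Phi rho mu nu /\
   exists j, iter_app Phi (p_alpha rho) j mu = nu.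
Proof.
  have Ht := p_seq rho.
  destruct (pigeon _ (fun k => iter_app Phi (p_alpha rho) (S k) mu)) as [nu Hnu].
  set f := fun N => proj1_sig (constructive_indefinite_description _ (Hnu N)).
  have Hf : forall N, (N <= f N)%coq_nat /\ iter_app Phi (p_alpha rho) (S (f N)) mu = nu.
  { move=> N. exact (proj2_sig (constructive_indefinite_description _ (Hnu N))). }
  pose g := fix g m := match m with O => f 0%nat | S m' => f (S (g m')) end.
  have Hg1 : forall m, (m <= g m)%coq_nat.
  { elim=> [|m IH] /=. lia. have := proj1 (Hf (S (g m))). lia. }
  have Hg2 : forall m, (g m < g (S m))%coq_nat.
  { move=> m /=. have := proj1 (Hf (S (g m))). lia. }
  have Hg3 : forall m, iter_app Phi (p_alpha rho) (S (g m)) mu = nu.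
  { case=> [|m] /=; apply Hf. }
  exists nu; split; last by exists (S (g 0%nat)).
  exists (fun m => p_t rho (g m)). split; [split|].
  - move=> m. apply (seq_lt _ Ht); auto.
  - move=> M. destruct (proj2 Ht M) as [k Hk]. exists k. have := seq_le _ Ht _ _ (Hg1 k). lra.
  - exists 0%nat => k _. rewrite (@orbit_at _ _ _ _ _ (g k)). apply Hg3.
    split. lra. apply Ht.
Qed.

End Aux.
Arguments construct {n Phi rho mu mu' beta m j}.
Arguments ev_omega_Or {n Phi r1 r2 m1 m2 T}.
Arguments ev_omega {n Phi r1 r2 m1 m2 T}.
Arguments omega_ne {n} Phi rho mu.
Arguments orbit_val {n} Phi rho mu s.

Theorem theorem54 (n : nat) (hn : (0 < n)%N) (Phi : state n -> state n) (mu : state n) (rho : Pn n) :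
  seqv (Wbar_orb Phi rho mu) (Wbar Phi (Or Phi rho mu)) /\
  ssub (Wund_orb Phi rho mu) (Wund Phi (Or Phi rho mu)) /\
  seqv (Wbar_om Phi rho mu) (Wbar Phi (omega Phi rho mu)) /\
  ssub (Wund_om Phi rho mu) (Wund Phi (omega Phi rho mu)).
Proof.
  split; [|split; [|split]].
  - move=> mu'; split.
    + move=> [rho' [T H]]. exists rho'. exact: ev_omega_Or H.
    + move=> [rho' Hs]. destruct (omega_ne Phi rho' mu') as [nu [Hnu [j' Hj']]].
      destruct (Hs _ Hnu) as [s Hs'].
      destruct (orbit_val Phi rho mu s) as [j Hj].
      rewrite Hj in Hs'. rewrite -Hs' in Hj'.
      destruct (construct Hj') as [r2 [T H]]. by exists r2, T.
  - move=> mu' H rho'. destruct (H rho') as [T HT]. exact: ev_omega_Or HT.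
  - move=> mu'; split.
    + move=> [rho' H]. exists rho' => x Hx. by apply H.
    + move=> [rho' Hs]. destruct (omega_ne Phi rho' mu') as [nu [Hnu [j' Hj']]].
      destruct (Hs _ Hnu) as [sk [_ [K HK]]].
      destruct (orbit_val Phi rho mu (sk K)) as [j Hj].
      rewrite HK in Hj; last by [].
      rewrite Hj in Hj'.
      destruct (construct Hj') as [r2 [T H]]. exists r2 => x; split.
      * apply (ev_omega H).
      * apply (@ev_omega _ _ _ _ _ _ T) => s Hs0. by rewrite H.
  - move=> mu' H rho' x Hx. by apply (H rho').
Qed.
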